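(* Let $q_1\le q_2\le\dots\le q_L$ be positive reals, and suppose there exist distinct positive reals $p_1,\dots,p_K$ such that: (C1) for each $1\le\ell\le L$, $q_\ell=\sum_{k\in T_\ell}p_k$ for some $T_\ell\subseteq\{1,\dots,K\}$; (C2) for each $1\le k\le K$ there exists $\ell$ with $q_\ell=p_k$; (C3) $\sum_{k\in T}p_k\neq\sum_{k\in T'}p_k$ for all distinct $T,T'\subseteq\{1,\dots,K\}$. Then the sparsest-fit algorithm run on $q_1,\dots,q_L$ outputs $k(L)=K$ and, up to relabeling of the indices $1,\dots,K$, the values $p_1,\dots,p_K$ and the sets $A_k=\{\ell: k\in T_\ell\}$, $1\le k\le K$.
   Context: Sparsest-fit algorithm on input $q_1\le\dots\le q_L$: initialize $p_0=0$, $k(0)=0$, and $A_k=\emptyset$ for all $k$. For $\ell=1,\dots,L$: if $q_\ell=\sum_{k\in T}p_k$ for some $T\subseteq\{0,1,\dots,k(\ell-1)\}$ (using the values $p_k$ found so far), set $k(\ell)=k(\ell-1)$ and $A_k\leftarrow A_k\cup\{\ell\}$ for all $k\in T$; otherwise set $k(\ell)=k(\ell-1)+1$, $p_{k(\ell)}=q_\ell$ and $A_{k(\ell)}\leftarrow A_{k(\ell)}\cup\{\ell\}$. Finally output $k(L)$ and $(p_k,A_k)$ for $1\le k\le k(L)$. The algorithm has no knowledge of $K$ or of the sets $T_\ell$. *)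

(* Defs.v *)
From HB Require Import structures.
From mathcomp Require Import all_boot all_order all_algebra.
From mathcomp Require Import reals.
Set Implicit Arguments. Unset Strict Implicit. Unset Printing Implicit Defensive.
Import Order.TTheory GRing.Theory Num.Theory.
Local Open Scope ring_scope.

(* Sparsest-fit algorithm, as a relation describing all possible runs
   (the algorithm may choose any fitting T).  Inputs are 0-indexed:
   q 0, ..., q (L-1) stand for q_1, ..., q_L.  A state after processing
   l inputs is (k, pv, A): k = k(l), pv j = p_j (pv 0 = 0), and
   A j m = true iff input m (0-indexed) belongs to A_j.
   A subset T of {0,...,k} is a boolean predicate T on nat; its sum is
   \sum_(0 <= i < k.+1 | T i) pv i. *)
Inductive sf_run (R : realType) (q : nat -> R)
  : nat -> nat -> (nat -> R) -> (nat -> nat -> bool) -> Prop :=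
| sf_nil : sf_run q 0 0 (fun _ => 0) (fun _ _ => false)
| sf_old l k pv A (T : pred nat) :
    sf_run q l k pv A ->
    q l = \sum_(0 <= i < k.+1 | T i) pv i ->
    sf_run q l.+1 k pv (fun j m => A j m || [&& m == l, (j <= k)%N & T j])
| sf_new l k pv A :
    sf_run q l k pv A ->
    (forall T : pred nat, q l <> \sum_(0 <= i < k.+1 | T i) pv i) ->
    sf_run q l.+1 k.+1 (fun j => if j == k.+1 then q l else pv j)
           (fun j m => A j m || ((m == l) && (j == k.+1))).

(* Main.v *)
Require Import Defs.
From HB Require Import structures.
From mathcomp Require Import all_boot all_order all_algebra.
From mathcomp Require Import reals.
From Stdlib Require Import Classical.
Import Order.TTheory GRing.Theory Num.Theory.
Local Open Scope ring_scope.

Lemma sum_reindex (R : realType) (K k : nat) (p : 'I_K -> R) (pv : nat -> R)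
  (F : {set 'I_K}) (psi : 'I_K -> nat) (Tp : pred nat) :
  {in F &, injective psi} ->
  (forall i, i \in F -> 0 < psi i <= k)%N ->
  (forall j, 0 < j <= k -> exists2 i, i \in F & psi i = j)%N ->
  (forall i, i \in F -> pv (psi i) = p i) ->
  pv 0%N = 0 ->
  \sum_(0 <= j < k.+1 | Tp j) pv j = \sum_(i in F | Tp (psi i)) p i.
Proof.
move=> inj rng sur pvp pv0.
have hperm : perm_eq (index_iota 0 k.+1) (0%N :: map psi (enum F)).
  apply: uniq_perm.
  - exact: iota_uniq.
  - rewrite /= map_inj_in_uniq ?enum_uniq; last first.
      by move=> x y; rewrite !mem_enum; exact: inj.
    rewrite andbT; apply/mapP => -[i]; rewrite mem_enum => /rng.
    by move=> /andP[+ _] h0; rewrite -h0.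
  move=> j; rewrite mem_index_iota inE /=.
  case: j => [|j] //=.
  apply/idP/mapP.
  - move=> hj; have [i iF <-] := sur j.+1 hj.
    by exists i; rewrite ?mem_enum.
  - by move=> [i]; rewrite mem_enum => /rng /andP[_ h] ->; rewrite ltnS.
rewrite (perm_big _ hperm) big_cons /= pv0.
rewrite big_map big_enum_cond.
by case: (Tp 0%N); rewrite ?add0r; apply: eq_bigr => i /andP[iF _]; exact: pvp.
Qed.
Record Inv (R : realType) (K : nat) (q : nat -> R) (p : 'I_K -> R)
  (T : nat -> {set 'I_K}) (l k : nat) (pv : nat -> R) (A : nat -> nat -> bool)
  (F : {set 'I_K}) (psi : 'I_K -> nat) : Prop := {
  i_card : k = #|F|;
  i_inj : {in F &, injective psi};
  i_rng : forall i, i \in F -> (0 < psi i <= k)%N;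
  i_sur : forall j, (0 < j <= k)%N -> exists2 i, i \in F & psi i = j;
  i_pv : forall i, i \in F -> pv (psi i) = p i;
  i_pv0 : pv 0%N = 0;
  i_A : forall i m, i \in F -> A (psi i) m = (m < l)%N && (i \in T m);
  i_Ahi : forall j m, (k < j)%N -> A j m = false;
  i_found : forall m i, (m < l)%N -> q m = p i -> i \in F;
  i_sub : forall m, (m < l)%N -> T m \subset F }.
Arguments Inv {R K}.
Arguments sum_reindex {R K k p pv F psi}.


Lemma set_eq_of_sum (R : realType) (K : nat) (p : 'I_K -> R)
  (C3 : forall T1 T2 : {set 'I_K}, T1 != T2 ->
          \sum_(k in T1) p k <> \sum_(k in T2) p k) (T1 T2 : {set 'I_K}) :
  \sum_(k in T1) p k = \sum_(k in T2) p k -> T1 = T2.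
Proof. by move=> h; apply/eqP; apply/negPn/negP => /C3. Qed.
Arguments set_eq_of_sum {R K p} C3 {T1 T2}.

Lemma inv_run (R : realType) (L K : nat) (q : nat -> R) (p : 'I_K -> R)
  (T : nat -> {set 'I_K})
  (q_sorted : forall l m, (l <= m)%N -> (m < L)%N -> q l <= q m)
  (p_pos : forall k, 0 < p k)
  (p_inj : injective p)
  (C1 : forall l, (l < L)%N -> q l = \sum_(k in T l) p k)
  (C2 : forall k, exists l, (l < L)%N /\ q l = p k)
  (C3 : forall T1 T2 : {set 'I_K}, T1 != T2 ->
          \sum_(k in T1) p k <> \sum_(k in T2) p k) :
  forall l k pv A, sf_run q l k pv A -> (l <= L)%N ->
    exists F psi, Inv q p T l k pv A F psi.
Proof.
move=> l k pv A; elim => {l k pv A}.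
- move=> _; exists set0, (fun _ => 0%N); split => //; first by rewrite cards0.
  all: try by move=> i; rewrite in_set0.
  all: try by move=> i j; rewrite in_set0.
  all: try by case=> // j /andP[].
- move=> l k pv A Tp run IH hq hlL.
  have hl : (l < L)%N by [].
  have [F [psi I]] := IH (ltnW hl).
  case: I => hc hinj hrng hsur hpv hpv0 hA hAhi hfound hsub.
  rewrite (sum_reindex Tp hinj hrng hsur hpv hpv0) in hq.
  have hTl : T l = [set i | (i \in F) && Tp (psi i)].
    apply: (set_eq_of_sum C3); rewrite -C1 // hq.
    by apply: eq_bigl => i; rewrite inE.
  exists F, psi; split => //.
  + move=> i m iF; rewrite hA //; move: (hrng _ iF) => /andP[_ ->]; rewrite /=.
    case: (ltngtP m l) => [hml|hml|->].
    * by rewrite /= orbF ltnS (ltnW hml).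
    * by rewrite /= ltnS leqNgt hml.
    * by rewrite /= ltnS leqnn hTl inE iF.
  + by move=> j m hj; rewrite hAhi // leqNgt hj andbF.
  + move=> m i; rewrite ltnS leq_eqVlt => /orP[/eqP -> hqi|]; last exact: hfound.
    have : T l = [set i].
      by apply: (set_eq_of_sum C3); rewrite -C1 // hqi big_set1.
    by rewrite hTl => /setP /(_ i); rewrite !inE eqxx => /andP[].
  + move=> m; rewrite ltnS leq_eqVlt => /orP[/eqP ->|]; last exact: hsub.
    by rewrite hTl; apply/subsetP => i; rewrite inE => /andP[].
- move=> l k pv A run IH hnot hlL.
  have hl : (l < L)%N by [].
  have [F [psi I]] := IH (ltnW hl).
  case: I => hc hinj hrng hsur hpv hpv0 hA hAhi hfound hsub.
  have [i0 i0T i0F] : exists2 i0, i0 \in T l & i0 \notin F.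
    apply: NNPP => hno.
    pose Tp := fun j => [exists i, (psi i == j) && (i \in T l)].
    apply: (hnot Tp).
    rewrite (sum_reindex Tp hinj hrng hsur hpv hpv0) C1 //.
    apply: eq_bigl => i.
    apply/idP/idP.
    - move=> iT; have iF : i \in F.
        by apply: NNPP => iF; apply: hno; exists i => //; apply/negP.
      by rewrite iF /Tp; apply/existsP; exists i; rewrite eqxx.
    - move=> /andP[iF /existsP[i' /andP[/eqP e i'T]]].
      have i'F : i' \in F.
        by apply: NNPP => i'F; apply: hno; exists i' => //; apply/negP.
      by rewrite -(hinj _ _ i'F iF e).
  have hql : q l = p i0.
    have [l' [hl' hql']] := C2 i0.
    have hll' : (l <= l')%N.
      rewrite leqNgt; apply/negP => hlt.
      by move: i0F; rewrite (hfound _ _ hlt hql').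
    apply/eqP; rewrite eq_le; apply/andP; split.
      by rewrite -hql'; apply: q_sorted.
    rewrite C1 // (bigD1 i0) //= lerDl; apply: sumr_ge0 => i _.
    exact: ltW.
  have hTl : T l = [set i0].
    by apply: (set_eq_of_sum C3); rewrite -C1 // hql big_set1.
  pose psi' := fun i => if i == i0 then k.+1 else psi i.
  have psiF : forall i, i \in F -> psi' i = psi i.
    by move=> i iF; rewrite /psi'; case: eqP => // e; move: i0F; rewrite -e iF.
  have psiF' : forall i, i \in F -> (psi i == k.+1) = false.
    move=> i iF; apply/negbTE; move: (hrng _ iF) => /andP[_ h].
    by rewrite neq_ltn ltnS h.
  exists (i0 |: F), psi'; split.
  + by rewrite cardsU1 i0F hc.
  + move=> x y; rewrite !inE => /orP[/eqP ->|xF] /orP[/eqP ->|yF] //.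
    * by rewrite (psiF _ yF) /psi' eqxx => /esym /eqP; rewrite psiF'.
    * by rewrite (psiF _ xF) /psi' eqxx => /eqP; rewrite psiF'.
    * by rewrite !psiF //; exact: hinj.
  + move=> i; rewrite !inE => /orP[/eqP ->|iF]; first by rewrite /psi' eqxx /=.
    by rewrite psiF //; move: (hrng _ iF) => /andP[-> h]; rewrite (leq_trans h).
  + move=> j /andP[j0]; rewrite leq_eqVlt ltnS => /orP[/eqP ->|hj].
      by exists i0; rewrite ?setU11 // /psi' eqxx.
    have [i iF <-] := hsur j (introT andP (conj j0 hj)).
    by exists i; rewrite ?setU1r ?psiF.
  + move=> i; rewrite !inE => /orP[/eqP ->|iF]; first by rewrite /psi' !eqxx.
    by rewrite psiF // psiF' // hpv.
  + by [].
  + move=> i m; rewrite !inE => /orP[/eqP ->|iF].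
      rewrite /psi' eqxx hAhi // eqxx andbT /=.
      case: (ltngtP m l) => [hml|hml|->].
      * rewrite ltnS (ltnW hml) /=; apply/esym/negP => h.
        by move: i0F; rewrite (subsetP (hsub _ hml) _ h).
      * by rewrite ltnS leqNgt hml.
      * by rewrite ltnS leqnn hTl set11.
    rewrite psiF // hA // psiF' // andbF orbF.
    case: (ltngtP m l) => [hml|hml|->].
    * by rewrite ltnS (ltnW hml).
    * by rewrite ltnS leqNgt hml.
    * rewrite ltnS leqnn hTl inE /=; apply/esym/negP => /eqP e.
      by move: i0F; rewrite -e iF.
  + move=> j m hj; rewrite hAhi ?(ltn_trans _ hj) //=.
    by rewrite (gtn_eqF hj) andbF.
  + move=> m i; rewrite ltnS leq_eqVlt => /orP[/eqP -> hqi|hm hqi].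
      by rewrite !inE (p_inj _ _ (etrans (esym hqi) hql)) eqxx.
    by rewrite !inE (hfound _ _ hm hqi) orbT.
  + move=> m; rewrite ltnS leq_eqVlt => /orP[/eqP ->|hm].
      by rewrite hTl sub1set setU11.
    by apply: (subset_trans (hsub _ hm)); apply/subsetP => x xF; rewrite setU1r.
Qed.

Lemma run_exists (R : realType) (q : nat -> R) (l : nat) :
  exists k pv A, sf_run q l k pv A.
Proof.
elim: l => [|l [k [pv [A run]]]]; first by exists 0%N, (fun _ => 0), (fun _ _ => false); exact: sf_nil.
case: (classic (exists Tp : pred nat, q l = \sum_(0 <= i < k.+1 | Tp i) pv i)).
- move=> [Tp h]; do 3 eexists; exact: (sf_old run h).
- move=> h; do 3 eexists; apply: (sf_new run) => Tp e; apply: h; by exists Tp.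
Qed.

(* p k (k : 'I_K) stands for p_{k+1}; T l (l < L) stands for T_{l+1}. *)
Theorem lemma2 (R : realType) (L K : nat) (q : nat -> R) (p : 'I_K -> R)
  (T : nat -> {set 'I_K})
  (q_pos : forall l, (l < L)%N -> 0 < q l)
  (q_sorted : forall l m, (l <= m)%N -> (m < L)%N -> q l <= q m)
  (p_pos : forall k, 0 < p k)
  (p_inj : injective p)
  (C1 : forall l, (l < L)%N -> q l = \sum_(k in T l) p k)
  (C2 : forall k, exists l, (l < L)%N /\ q l = p k)
  (C3 : forall T1 T2 : {set 'I_K}, T1 != T2 ->
          \sum_(k in T1) p k <> \sum_(k in T2) p k) :
  (exists k pv A, sf_run q L k pv A) /\
  (forall k pv A, sf_run q L k pv A ->
     k = K /\
     exists sigma : 'I_K -> 'I_K, bijective sigma /\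
       forall i : 'I_K, pv (sigma i).+1 = p i /\
         forall l, A (sigma i).+1 l = (l < L)%N && (i \in T l)).
Proof.
split; first exact: run_exists.
move=> k pv A run.
have [F [psi I]] := @inv_run R L K q p T q_sorted p_pos p_inj C1 C2 C3 _ _ _ _ run (leqnn L).
case: I => hc hinj hrng hsur hpv hpv0 hA hAhi hfound hsub.
have allF : forall i, i \in F.
  by move=> i; have [l' [hl' e]] := C2 i; exact: (hfound _ _ hl' e).
have FT : F = setT by apply/setP => i; rewrite inE allF.
have hk : k = K by rewrite hc FT cardsT card_ord.
split => //.
pose sigma := fun i : 'I_K => insubd i (psi i).-1.
have hs : forall i, (sigma i).+1 = psi i.
  move=> i; move: (hrng _ (allF i)) => /andP[h0 h1].
  have hlt : ((psi i).-1 < K)%N by rewrite -hk -ltnS prednK.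
  by rewrite /sigma insubdK ?prednK.
exists sigma; split.
- apply: injF_bij => i j e.
  apply: hinj; rewrite ?allF //.
  by rewrite -!hs e.
- move=> i; rewrite hs; split; first exact: hpv.
  by move=> l; rewrite hA.
Qed.
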